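(* Let $G=(V,E)$ be $(2,2)$-$C_i$-tight and let $v\in V$ have degree 3 with $N(v)\cap N(v')=\{x,x'\}$, so $N(v)=\{x,x',y\}$. Then, after possibly interchanging the names of $x$ and $x'$, one of the following holds: (1) $xy,x'y,xy',x'y'\in E$ and $G[\{v,v',x,x',y,y'\}]\cong F_1$; (2) $xy,x'y'\in E$, $xy',x'y\notin E$, and $G-\{v,v'\}+\{xy',x'y\}$ is $(2,2)$-$C_i$-tight; (3) $xy,x'y,xy',x'y'\notin E$, and either $G-\{v,v'\}+\{xy,x'y'\}$ or $G-\{v,v'\}+\{xy',x'y\}$ is $(2,2)$-$C_i$-tight.
   Context: A $\mathbb{Z}_2$-symmetric graph is a finite simple graph $G=(V,E)$ with an automorphism $\theta$, $\theta^2=\mathrm{id}$; write $v'=\theta(v)$. A vertex is fixed if $v'=v$; an edge $uv$ is fixed if $\{u',v'\}=\{u,v\}$. $G$ is $(2,2)$-sparse if every subgraph $(V',E')$ with $V'\ne\emptyset$ has $|E'|\le2|V'|-2$, $(2,2)$-tight if also $|E|=2|V|-2$. $G$ is $(2,2)$-$C_i$-tight if it is $(2,2)$-tight and $\theta$ fixes no vertex and no edge. $F_1$ is the graph on six vertices $a,b,c,d,e,f$ whose edges are all edges between $\{c,d\}$ and $\{a,b,e,f\}$ together with $ab$ and $ef$ (10 edges). $G-\{v,v'\}+\{st,s't'\}$ denotes deleting $v,v'$ and adding edges $st,s't'$ with the restricted involution. *)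

(* Defs.v *)
(* A graph is a vertex set V : {set T} inside an ambient
   finite type T, with edge set E : {set {set T}} of 2-element subsets. *)
From mathcomp Require Import all_boot.
Set Implicit Arguments. Unset Strict Implicit. Unset Printing Implicit Defensive.

Section Defs.
Variable T : finType.

Definition simple_graph (V : {set T}) (E : {set {set T}}) : Prop :=
  forall f, f \in E -> f \subset V /\ #|f| = 2.

Definition Z2_symmetric (V : {set T}) (E : {set {set T}}) (th : T -> T) : Prop :=
  [/\ simple_graph V E,
      {in V, forall x, th x \in V},
      {in V, forall x, th (th x) = x} &
      forall f, f \in E -> th @: f \in E].

Definition sparse22 (V : {set T}) (E : {set {set T}}) : Prop :=
  forall (V' : {set T}) (E' : {set {set T}}),
    V' \subset V -> E' \subset E -> (forall f, f \in E' -> f \subset V') ->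
    V' != set0 -> #|E'| + 2 <= 2 * #|V'|.

Definition tight22 (V : {set T}) (E : {set {set T}}) : Prop :=
  sparse22 V E /\ #|E| + 2 = 2 * #|V|.

Definition Ci_tight (V : {set T}) (E : {set {set T}}) (th : T -> T) : Prop :=
  [/\ Z2_symmetric V E th, tight22 V E,
      {in V, forall x, th x != x} &
      forall f, f \in E -> th @: f != f].

Definition nbhd (V : {set T}) (E : {set {set T}}) (v : T) : {set T} :=
  [set u in V | [set v; u] \in E].

Definition red_V (V : {set T}) (th : T -> T) (v : T) : {set T} :=
  V :\: [set v; th v].
Definition red_E (V : {set T}) (E : {set {set T}}) (th : T -> T) (v s t : T)
  : {set {set T}} :=
  [set f in E | f \subset red_V V th v] :|: [set [set s; t]; [set th s; th t]].

(* the graph F_1 on 'I_6 with a,b,c,d,e,f = 0,1,2,3,4,5 :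
   all edges between {c,d} and {a,b,e,f}, plus ab and ef *)
Definition F1_adj (i j : 'I_6) : bool :=
  let i := nat_of_ord i in let j := nat_of_ord j in
  let cd k := (k == 2) || (k == 3) in
  [|| (cd i && ~~ cd j), (cd j && ~~ cd i),
      [&& i != j, i <= 1 & j <= 1] | [&& i != j, 4 <= i & 4 <= j]].
Definition F1_edges : {set {set 'I_6}} :=
  [set f : {set 'I_6} | [exists i, exists j, (f == [set i; j]) && F1_adj i j]].

Definition induced_iso_F1 (E : {set {set T}}) (S : {set T}) : Prop :=
  exists phi : 'I_6 -> T,
    [/\ injective phi, phi @: setT = S &
        forall i j : 'I_6, ([set phi i; phi j] \in E) = ([set i; j] \in F1_edges)].

End Defs.

(* Main.v *)
Require Import Defs.
From mathcomp Require Import all_boot.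
From mathcomp Require Import zify.
From Stdlib Require Import Classical.
Set Implicit Arguments. Unset Strict Implicit. Unset Printing Implicit Defensive.

Definition iE (T : finType) (E : {set {set T}}) (U : {set T}) :=
  [set f in E | f \subset U].

Lemma iE_sub (T : finType) (E : {set {set T}}) (U U' : {set T}) :
  U \subset U' -> iE E U \subset iE E U'.
Proof.
move=> s; apply/subsetP=> f; rewrite !inE => /andP[-> H] /=.
exact: subset_trans H s.
Qed.

Lemma sparse_iE (T : finType) (V : {set T}) (E : {set {set T}}) (U : {set T}) : sparse22 V E -> U \subset V ->
  U != set0 -> #|iE E U| + 2 <= 2 * #|U|.
Proof.
move=> sp sUV nz; apply: sp => //.
  by apply/subsetP => f; rewrite inE => /andP[].
by move=> f; rewrite inE => /andP[].
Qed.

Lemma iE_I (T : finType) (E : {set {set T}}) (A B : {set T}) :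
  iE E A :&: iE E B = iE E (A :&: B).
Proof.
apply/setP => f; rewrite !inE subsetI.
by case: (f \in E).
Qed.

Lemma iE_union (T : finType) (E : {set {set T}}) (A B : {set T}) :
  #|iE E A| + #|iE E B| <= #|iE E (A :|: B)| + #|iE E (A :&: B)|.
Proof.
rewrite -cardsUI iE_I leq_add2r subset_leq_card //.
apply/subsetP => f; rewrite !inE => /orP[]/andP[-> H] /=;
  apply: subset_trans H _; [apply: subsetUl|apply: subsetUr].
Qed.

Lemma tight_union (T : finType) (V : {set T}) (E : {set {set T}}) (A B : {set T}) : sparse22 V E ->
  A \subset V -> B \subset V -> A :&: B != set0 ->
  #|iE E A| + 2 = 2 * #|A| -> #|iE E B| + 2 = 2 * #|B| ->
  #|iE E (A :|: B)| + 2 = 2 * #|A :|: B|.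
Proof.
move=> sp sA sB nz tA tB.
have h1 := iE_union E A B.
have h2 := sparse_iE sp (subset_trans (subsetIl A B) sA) nz.
have nzU : A :|: B != set0.
  case/set0Pn: nz => z; rewrite inE => /andP[zA _].
  by apply/set0Pn; exists z; rewrite inE zA.
have sU : A :|: B \subset V by rewrite subUset sA.
have h3 := sparse_iE sp sU nzU.
have h4 := cardsUI A B.
lia.
Qed.

Lemma set2C (T : finType) (a b : T) : [set a; b] = [set b; a].
Proof. by apply/setP=> z; rewrite !inE orbC. Qed.

Lemma set2_inj (T : finType) (w : T) : injective (fun u => [set w; u]).
Proof.
move=> u1 u2 /= e.
have h1 : u2 \in [set w; u1] by rewrite e !inE eqxx orbT.
have h2 : u1 \in [set w; u2] by rewrite -e !inE eqxx orbT.
move: h1 h2; rewrite !inE.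
by case/orP=> /eqP -> ; case/orP => /eqP.
Qed.

Lemma nbhd_ne (T : finType) (V : {set T}) E w u : simple_graph V E ->
  u \in nbhd V E w -> w != u.
Proof.
move=> sg; rewrite inE => /andP[_ /sg [_]].
by rewrite cards2; case: (w != u).
Qed.

Lemma iE_add (T : finType) (V : {set T}) (E : {set {set T}}) (w : T) (U : {set T}) :
  simple_graph V E -> w \notin U ->
  #|iE E (w |: U)| = #|iE E U| + #|nbhd V E w :&: U|.
Proof.
move=> sg wU.
pose S := [set [set w; u] | u in nbhd V E w :&: U].
have cS : #|S| = #|nbhd V E w :&: U|.
  by apply: card_imset; apply: set2_inj.
have dis : iE E U :&: S = set0.
  apply/setP => f; rewrite !inE; apply/negbTE; apply/negP => /andP[/andP[_ fU]].
  case/imsetP => u _ fe; move: fU; rewrite fe => /subsetP /(_ w).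
  by rewrite !inE eqxx /= (negbTE wU) => /(_ isT).
have eq : iE E (w |: U) = iE E U :|: S.
  apply/eqP; rewrite eqEsubset; apply/andP; split; last first.
    rewrite subUset iE_sub ?subsetU1 //=.
    apply/subsetP => f /imsetP [u]; rewrite !inE => /andP[/andP[uV ue] uU] ->.
    rewrite ue /=; apply/subsetP => z; rewrite !inE.
    by case/orP => /eqP ->; rewrite ?eqxx ?uU ?orbT.
  apply/subsetP => f; rewrite !inE => /andP[fE fU].
  case wf: (w \in f); last first.
    apply/orP; left; rewrite fE /=; apply/subsetP => z zf.
    move/subsetP: fU => /(_ z zf); rewrite !inE => /orP[/eqP ez|//].
    by move: zf; rewrite ez wf.
  have [fV /eqP /cards2P [p [q [pq fpq]]]] := sg f fE.
  have [u [fwu uw]] : exists u, f = [set w; u] /\ u != w.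
    move: wf; rewrite fpq !inE => /orP[] /eqP ew.
      by exists q; rewrite ew; split => //; rewrite eq_sym.
    by exists p; rewrite ew set2C; split.
  apply/orP; right; apply/imsetP; exists u => //.
  rewrite !inE -fwu fE andbT.
  have uf : u \in f by rewrite fwu !inE eqxx orbT.
  move/subsetP: fV => /(_ u uf) -> /=.
  by move/subsetP: fU => /(_ u uf); rewrite !inE (negbTE uw).
rewrite eq cardsU dis cards0 subn0 cS.
done.
Qed.

Lemma imset2 (T : finType) (th : T -> T) (a b : T) :
  th @: [set a; b] = [set th a; th b].
Proof. by rewrite imsetU1 imset_set1. Qed.

Lemma invol_imset (T : finType) (V : {set T}) (th : T -> T) (A : {set T}) :
  {in V, forall x, th (th x) = x} -> A \subset V -> th @: (th @: A) = A.
Proof.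
move=> inv sA; rewrite -imset_comp -[RHS]imset_id.
apply: eq_in_imset => z zA /=; apply: inv; exact: (subsetP sA).
Qed.

Lemma th_sub (T : finType) (V : {set T}) (th : T -> T) (A : {set T}) :
  {in V, forall x, th x \in V} -> A \subset V -> th @: A \subset V.
Proof.
move=> thV sA; apply/subsetP => z /imsetP [u uA ->]; apply: thV.
exact: (subsetP sA).
Qed.

Lemma card_th (T : finType) (V : {set T}) (th : T -> T) (A : {set T}) :
  {in V, forall x, th (th x) = x} -> A \subset V -> #|th @: A| = #|A|.
Proof.
move=> inv sA; apply: card_in_imset => p q pA qA e.
by rewrite -(inv p) ?e ?inv //; apply: (subsetP sA).
Qed.

Lemma edge_th (T : finType) (V : {set T}) E th (a b : T) :
  Z2_symmetric V E th -> [set a; b] \in E -> [set th a; th b] \in E.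
Proof. by case=> _ _ _ h /h; rewrite imset2. Qed.

Lemma iE_th (T : finType) (V : {set T}) E th (U : {set T}) :
  Z2_symmetric V E th -> U \subset V -> #|iE E U| <= #|iE E (th @: U)|.
Proof.
case=> sg thV inv thE sU.
have inj : {in iE E U &, injective (fun f : {set T} => th @: f)}.
  move=> f g; rewrite !inE => /andP[_ fU] /andP[_ gU] e.
  rewrite -(invol_imset inv (subset_trans fU sU)) e.
  exact: (invol_imset inv (subset_trans gU sU)).
rewrite -(card_in_imset inj); apply: subset_leq_card.
apply/subsetP => g /imsetP [f]; rewrite !inE => /andP[fE fU] ->.
by rewrite thE //= imsetS.
Qed.

Lemma nbhd_th (T : finType) (V : {set T}) E th (u : T) :
  Z2_symmetric V E th -> u \in V -> nbhd V E (th u) = th @: nbhd V E u.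
Proof.
move=> Z uV; have [sg thV inv thE] := Z.
apply/setP => w; apply/idP/idP.
  rewrite inE => /andP[wV e]; apply/imsetP; exists (th w); last by rewrite inv.
  by rewrite inE thV //= -{1}(inv u uV) (edge_th Z e).
case/imsetP => z; rewrite inE => /andP[zV e] ->.
by rewrite inE thV //= (edge_th Z e).
Qed.

Lemma set2_eq (T : finType) (i j k l : T) : [set i; j] = [set k; l] ->
  (i = k /\ j = l) \/ (i = l /\ j = k).
Proof.
move=> e.
have hi : i \in [set k; l] by rewrite -e !inE eqxx.
have hj : j \in [set k; l] by rewrite -e !inE eqxx orbT.
have hk : k \in [set i; j] by rewrite e !inE eqxx.
have hl : l \in [set i; j] by rewrite e !inE eqxx orbT.
move: hi hj hk hl; rewrite !inE.
case/orP=> /eqP ei; case/orP=> /eqP ej; subst => //; try by [left|right].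
- by move=> _ /orP[] /eqP ->; left.
- by move=> /orP[] /eqP ->; right.
Qed.

Lemma F1_adj_sym (i j : 'I_6) : F1_adj i j = F1_adj j i.
Proof.
by case: i => [[|[|[|[|[|[|i]]]]]] Hi] //; case: j => [[|[|[|[|[|[|j]]]]]] Hj].
Qed.

Lemma F1c (i j : 'I_6) : ([set i; j] \in F1_edges) = F1_adj i j.
Proof.
rewrite inE; apply/idP/idP.
  case/existsP => i0 /existsP [j0 /andP [/eqP e a]].
  by case: (set2_eq e) => [[-> ->]|[-> ->]] //; rewrite F1_adj_sym.
by move=> a; apply/existsP; exists i; apply/existsP; exists j; rewrite eqxx.
Qed.
Definition tightE (T : finType) (E : {set {set T}}) (X : {set T}) :=
  #|iE E X| + 2 = 2 * #|X|.

Lemma card3 (T : finType) (a b c : T) : #|[set a; b; c]| = 3 ->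
  [/\ a != b, a != c & b != c].
Proof.
rewrite setUC !cardsU1 cards1 !inE negb_or (eq_sym c a) (eq_sym c b).
by case: (a == b); case: (a == c); case: (b == c).
Qed.

Lemma memne (T : finType) (A : {set T}) p q : p \in A -> q \notin A -> p != q.
Proof. by move=> pA; apply: contra => /eqP <-. Qed.

Lemma pair_cover (T : finType) (V : {set T}) th (z p : T) (U : {set T}) :
  {in V, forall x, th (th x) = x} -> z \in V -> p \in [set z; th z] ->
  p \in U -> th p \in U -> z \in U /\ th z \in U.
Proof.
move=> inv zV; rewrite !inE => /orP[]/eqP -> //.
by rewrite inv // => a b; split.
Qed.

Lemma iE0 (T : finType) (V : {set T}) E : simple_graph V E -> iE E set0 = set0.
Proof.
move=> sg; apply/setP => f; rewrite !inE subset0; apply/negbTE.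
apply/negP => /andP[/sg [_ c] /eqP f0]; by move: c; rewrite f0 cards0.
Qed.

Lemma setU1_neq0 (T : finType) (a : T) (A : {set T}) : a |: A != set0.
Proof. by apply/set0Pn; exists a; rewrite in_setU1 eqxx. Qed.

Lemma arB (v e i k : nat) : 2 * v < e + 2 -> e <= i + k -> k <= 2 -> 2 * v <= i + 3.
Proof. lia. Qed.
Lemma arS (v e i k : nat) : 2 * v < e + 2 -> e <= i + k -> i + 2 <= 2 * v -> k <= 1 ->
  i + 2 = 2 * v.
Proof. lia. Qed.
Lemma arN (v e i k : nat) : 2 * v < e + 2 -> e <= i + k -> i + 2 <= 2 * v -> k <= 0 -> False.
Proof. lia. Qed.
Lemma arC (m n p q u : nat) : 1 + (p + q) <= u -> p + 2 = 2 * m -> q + 2 = 2 * n ->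
  2 * (m + n) <= u + 3.
Proof. lia. Qed.
Lemma arT (i e r vv : nat) : e + 2 = 2 * vv -> e = i + 6 -> vv = r + 2 -> i + 2 + 2 = 2 * r.
Proof. lia. Qed.

Theorem lemma5p5 (T : finType) (V : {set T}) (E : {set {set T}}) (th : T -> T)
  (v x y : T) :
  Ci_tight V E th -> v \in V ->
  #|nbhd V E v| = 3 ->
  nbhd V E v :&: nbhd V E (th v) = [set x; th x] ->
  nbhd V E v = [set x; th x; y] ->
  exists a : T, a \in [set x; th x] /\
   let a' := th a in let y' := th y in
   [\/ [/\ [set a; y] \in E, [set a'; y] \in E, [set a; y'] \in E,
           [set a'; y'] \in E &
           induced_iso_F1 E [set v; th v; a; a'; y; y']],
       [/\ [set a; y] \in E, [set a'; y'] \in E, [set a; y'] \notin E,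
           [set a'; y] \notin E &
           Ci_tight (red_V V th v) (red_E V E th v a y') th]
     | [/\ [set a; y] \notin E, [set a'; y] \notin E, [set a; y'] \notin E,
           [set a'; y'] \notin E &
           Ci_tight (red_V V th v) (red_E V E th v a y) th \/
           Ci_tight (red_V V th v) (red_E V E th v a y') th]].
Proof.
move=> HC vV H3 HI HN.
have [HZ [Hsp Hcnt] Hnfv Hnfe] := HC.
have [Hsg HthV Hinv HthE] := HZ.
have inV : forall w u, u \in nbhd V E w -> u \in V.
  by move=> w u; rewrite inE => /andP[].
have inEd : forall w u, u \in nbhd V E w -> [set w; u] \in E.
  by move=> w u; rewrite inE => /andP[].
have xN : x \in nbhd V E v by rewrite HN !inE eqxx.
have x'N : th x \in nbhd V E v by rewrite HN !inE eqxx orbT.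
have yN : y \in nbhd V E v by rewrite HN !inE eqxx !orbT.
have xV := inV _ _ xN; have x'V := inV _ _ x'N; have yV := inV _ _ yN.
have [xx' xy x'y] : [/\ x != th x, x != y & th x != y] by apply: card3; rewrite -HN.
have v'V : th v \in V := HthV v vV.
have vv' : v != th v by rewrite eq_sym Hnfv.
have fixedne : forall u, u \in V -> [set u; th u] \notin E.
  move=> u uV; apply/negP => e; have := Hnfe _ e.
  by rewrite imset2 Hinv // set2C eqxx.
have ninE : forall w u, u \in V -> u \notin nbhd V E w -> ([set w; u] \in E) = false.
  by move=> w u uV; rewrite inE uV /= => /negbTE.
have v'nN : th v \notin nbhd V E v by rewrite inE (negbTE (fixedne v vV)) andbF.
have Nv' : nbhd V E (th v) = [set th x; x; th y].
  by rewrite nbhd_th // HN imsetU imsetU1 !imset_set1 Hinv.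
have vnN' : v \notin nbhd V E (th v).
  rewrite inE vV /=; apply/negP => e; move: (fixedne v vV); by rewrite set2C e.
have ynN' : y \notin nbhd V E (th v).
  apply/negP => yN'; have : y \in [set x; th x] by rewrite -HI inE yN yN'.
  by rewrite !inE !(eq_sym y) (negbTE xy) (negbTE x'y).
have y'V := HthV y yV.
have yy' : y != th y by rewrite eq_sym Hnfv.
have y'x : th y != x.
  by apply/eqP=> e; move: x'y; rewrite -e Hinv // eqxx.
have y'x' : th y != th x.
  apply/eqP=> e; move: xy; rewrite -(Hinv x xV) -e Hinv // eqxx.
  done.
have xN' : x \in nbhd V E (th v) by rewrite Nv' !inE eqxx orbT.
have x'N' : th x \in nbhd V E (th v) by rewrite Nv' !inE eqxx.
have y'N' : th y \in nbhd V E (th v) by rewrite Nv' !inE eqxx !orbT.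
have y'nN : th y \notin nbhd V E v.
  apply/negP => yN2; have : th y \in [set x; th x] by rewrite -HI inE yN2 y'N'.
  by rewrite !inE (negbTE y'x) (negbTE y'x').
pose rV := red_V V th v.
have rVE : forall u, (u \in rV) = [&& u != v, u != th v & u \in V].
  by move=> u; rewrite /rV /red_V !inE negb_or -andbA.
have rV_sub : rV \subset V by apply: subsetDl.
have vnR : v \notin rV by rewrite rVE eqxx.
have v'nR : th v \notin rV by rewrite rVE eqxx andbF.
have nbrV : forall u, u \in nbhd V E v -> u \in rV.
  move=> u uN; rewrite rVE (inV _ _ uN) andbT eq_sym (nbhd_ne Hsg uN) /=.
  by apply/eqP => e; move: v'nN; rewrite -e uN.
have nbrV' : forall u, u \in nbhd V E (th v) -> u \in rV.
  move=> u uN; rewrite rVE (inV _ _ uN) andbT [u == th v]eq_sym (nbhd_ne Hsg uN) andbT.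
  by apply/eqP => e; move: uN; rewrite e (negbTE vnN').
have thrV : forall u, u \in rV -> th u \in rV.
  move=> u; rewrite !rVE => /and3P[uv uv' uV]; rewrite HthV // andbT.
  apply/andP; split; apply/eqP => e.
    by move: uv'; rewrite -e Hinv // eqxx.
  by move: uv; rewrite -(Hinv u uV) e Hinv // eqxx.
have thX : forall X : {set T}, X \subset rV -> th @: X \subset rV.
  move=> X sX; apply/subsetP => z /imsetP [u uX ->]; apply: thrV.
  exact: (subsetP sX).
have Vdec : V = v |: (th v |: rV).
  apply/setP => u; rewrite !in_setU1 rVE.
  case: (eqVneq u v) => [->|uv]; first by rewrite vV.
  by case: (eqVneq u (th v)) => [->|uv'] /=; rewrite ?v'V.
have cV : #|V| = #|rV| + 2.
  rewrite Vdec !cardsU1 !in_setU1 (negbTE vv') (negbTE vnR) (negbTE v'nR) /=.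
  by rewrite addnA addnC.
have EV : E = iE E V.
  apply/setP => f; rewrite inE; case fE: (f \in E) => //=.
  by have [-> _] := Hsg f fE.
have cN' : #|nbhd V E (th v)| = 3 by rewrite nbhd_th // (card_th Hinv) //; apply/subsetP=> u; apply: inV.
have cE : #|E| = #|iE E rV| + 6.
  rewrite {1}EV Vdec (iE_add Hsg); last by rewrite !in_setU1 (negbTE vv') (negbTE vnR).
  rewrite (iE_add Hsg) //.
  have s1 : nbhd V E v \subset th v |: rV.
    by apply/subsetP => u uN; rewrite in_setU1 nbrV ?orbT.
  have s2 : nbhd V E (th v) \subset rV by apply/subsetP => u uN; rewrite nbrV'.
  rewrite (setIidPl s1) (setIidPl s2).
  by rewrite H3 cN' -addnA.
have thtight : forall X : {set T}, X \subset rV -> X != set0 -> tightE E X -> tightE E (th @: X).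
  move=> X sX nz tX.
  have sXV := subset_trans sX rV_sub.
  have h1 := iE_th HZ sXV.
  have h2 := card_th Hinv sXV.
  have nz' : th @: X != set0.
    by case/set0Pn: nz => z zX; apply/set0Pn; exists (th z); apply: imset_f.
  have h3 := sparse_iE Hsp (subset_trans (thX X sX) rV_sub) nz'.
  rewrite /tightE in tX *; clear -h1 h2 h3 tX; lia.
have NvS : forall U : {set T}, x \in U -> th x \in U -> y \in U -> nbhd V E v \subset U.
  move=> U a b c; rewrite HN; apply/subsetP => z; rewrite !inE.
  by case/orP => [/orP[]|] /eqP->.
have Nv'S : forall U : {set T}, x \in U -> th x \in U -> th y \in U -> nbhd V E (th v) \subset U.
  move=> U a b c; rewrite Nv'; apply/subsetP => z; rewrite !inE.
  by case/orP => [/orP[]|] /eqP->.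
have T1 : forall U : {set T}, U \subset rV -> tightE E U -> x \in U -> th x \in U -> y \in U -> False.
  move=> U sU tU a b c.
  have vU : v \notin U by apply: contra vnR => /(subsetP sU).
  have h1 := iE_add Hsg vU.
  rewrite (setIidPl (NvS U a b c)) H3 in h1.
  have h2 : v |: U \subset V by rewrite subUset sub1set vV (subset_trans sU rV_sub).
  have h3 := sparse_iE Hsp h2 (setU1_neq0 v U).
  rewrite cardsU1 vU /= in h3; rewrite /tightE in tU; rewrite h1 in h3. clear -h3 tU. move: h3 tU. generalize #|iE E U| #|U|. lia.
have T2 : forall U : {set T}, U \subset rV -> x \in U -> th x \in U -> y \in U -> th y \in U ->
    2 * #|U| <= #|iE E U| + 3 -> False.
  move=> U sU a b c d bd.
  have vU : v \notin U by apply: contra vnR => /(subsetP sU).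
  have v'U : th v \notin U by apply: contra v'nR => /(subsetP sU).
  have vU1 : v \notin th v |: U by rewrite !in_setU1 (negbTE vv') (negbTE vU).
  have h1 := iE_add Hsg v'U.
  rewrite (setIidPl (Nv'S U a b d)) cN' in h1.
  have h2 := iE_add Hsg vU1.
  rewrite (setIidPl _) ?H3 in h2; last first.
    by apply: subset_trans (NvS U a b c) _; apply: subsetUr.
  have h4 : v |: (th v |: U) \subset V.
    by rewrite !subUset !sub1set vV v'V (subset_trans sU rV_sub).
  have h3 := sparse_iE Hsp h4 (setU1_neq0 _ _).
  rewrite !cardsU1 vU1 v'U /= in h3; rewrite h2 h1 in h3; clear -h3 bd.
  move: h3 bd; generalize #|iE E U| #|U|; lia.
have Sx_rV : forall p, p \in [set x; th x] -> p \in rV.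
  by move=> p; rewrite in_set2 => /orP[]/eqP->; apply: nbrV.
have Sy_rV : forall q, q \in [set y; th y] -> q \in rV.
  by move=> q; rewrite in_set2 => /orP[]/eqP->; [apply: nbrV|apply: nbrV'].
have Sx_th : forall p, p \in [set x; th x] -> th p \in [set x; th x].
  by move=> p; rewrite !inE => /orP[]/eqP->; rewrite ?Hinv // eqxx ?orbT.
have Sy_th : forall q, q \in [set y; th y] -> th q \in [set y; th y].
  by move=> q; rewrite !inE => /orP[]/eqP->; rewrite ?Hinv // eqxx ?orbT.
have Sxy : forall p q, p \in [set x; th x] -> q \in [set y; th y] -> p != q.
  move=> p q; rewrite !inE => /orP[]/eqP-> /orP[]/eqP->; rewrite // eq_sym //.
have cover : forall (U : {set T}) a b, a \in [set x; th x] -> b \in [set y; th y] ->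
    a \in U -> b \in U -> th a \in U -> th b \in U ->
    [/\ x \in U, th x \in U, y \in U & th y \in U].
  move=> U a b aS bS aU bU a'U b'U.
  have [h1 h2] := pair_cover Hinv xV aS aU a'U.
  have [h3 h4] := pair_cover Hinv yV bS bU b'U.
  by split.
have rVV : forall u, u \in rV -> u \in V by move=> u; apply: (subsetP rV_sub).
have red : forall a b, a \in [set x; th x] -> b \in [set y; th y] -> [set a; b] \notin E ->
   Ci_tight rV (red_E V E th v a b) th \/
   exists X : {set T}, [/\ X \subset rV, tightE E X, a \in X, b \in X & X :&: th @: X = set0].
  move=> a b aS bS nab.
  have aR := Sx_rV _ aS; have bR := Sy_rV _ bS.
  have a'S := Sx_th _ aS; have b'S := Sy_th _ bS.
  have a'R := Sx_rV _ a'S; have b'R := Sy_rV _ b'S.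
  have aV := rVV _ aR; have bV := rVV _ bR.
  have ab : a != b := Sxy _ _ aS bS.
  have a'b' : th a != th b := Sxy _ _ a'S b'S.
  have nab' : [set th a; th b] \notin E.
    by apply: contra nab => e; have := edge_th HZ e; rewrite !Hinv.
  have e12 : [set a; b] != [set th a; th b].
    apply/eqP => e; case: (set2_eq e) => [[e1 _]|[e1 _]].
      by move: (Hnfv a aV); rewrite -e1 eqxx.
    by move: (Sxy _ _ aS b'S); rewrite e1 eqxx.
  pose N := [set [set a; b]; [set th a; th b]].
  have rEE : red_E V E th v a b = iE E rV :|: N by [].
  case: (classic (exists X : {set T}, [/\ X \subset rV, tightE E X, a \in X, b \in X
     & X :&: th @: X = set0])) => [ex|nex]; first by right.
  left.
  have single : forall X : {set T}, X \subset rV -> tightE E X -> a \in X -> b \in X -> False.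
    move=> X sX tX aX bX.
    case: (eqVneq (X :&: th @: X) set0) => [dis|ndis].
      by apply: nex; exists X.
    have sXV := subset_trans sX rV_sub.
    have nzX : X != set0 by apply/set0Pn; exists a.
    have tY := thtight X sX nzX tX.
    have sYV := subset_trans (thX X sX) rV_sub.
    have tU := tight_union Hsp sXV sYV ndis tX tY.
    have sU : X :|: th @: X \subset rV by rewrite subUset sX thX.
    have [h1 h2 h3 _] := cover (X :|: th @: X) a b aS bS
        (subsetP (subsetUl _ _) _ aX) (subsetP (subsetUl _ _) _ bX)
        (subsetP (subsetUr _ _) _ (imset_f th aX)) (subsetP (subsetUr _ _) _ (imset_f th bX)).
    exact: T1 _ sU tU h1 h2 h3.
  rewrite rEE.
  split.
  - split.
    + move=> f; rewrite in_setU => /orP[|].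
        by rewrite /iE inE => /andP[fE fS]; have [_ ->] := Hsg f fE.
      rewrite in_set2 => /orP[]/eqP->; (split; [apply/subsetP => z; rewrite in_set2 => /orP[]/eqP-> //|by rewrite cards2 ?ab ?a'b']).
    + by move=> u uR; apply: thrV.
    + by move=> u uR; apply: Hinv; apply: rVV.
    + move=> f; rewrite in_setU => /orP[|].
        rewrite /iE inE => /andP[fE fS]; rewrite in_setU; apply/orP; left; rewrite inE HthE //=.
        exact: thX.
      rewrite in_set2 => /orP[]/eqP->; rewrite imset2 ?Hinv // in_setU in_set2 eqxx ?orbT //.
  - split.
    + move=> V' E' sV' sE' inV' nz.
      rewrite leqNgt; apply/negP => viol.
      have sV'V := subset_trans sV' rV_sub.
      have spX := sparse_iE Hsp sV'V nz.
      have bound : #|E'| <= #|iE E V'| + #|E' :&: N|.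
        have sub : E' \subset iE E V' :|: (E' :&: N).
          apply/subsetP => f fE'; have := subsetP sE' f fE'; rewrite in_setU => /orP[|fN].
            by rewrite /iE inE => /andP[fE _]; rewrite in_setU /iE inE fE inV'.
          by rewrite in_setU in_setI fE' fN orbT.
        apply: leq_trans (subset_leq_card sub) _.
        by rewrite cardsU leq_subr.
      have e1sub : [set a; b] \in E' -> a \in V' /\ b \in V'.
        by move=> h; have /subsetP s := inV' _ h; split; apply: s; rewrite in_set2 eqxx ?orbT.
      have e2sub : [set th a; th b] \in E' -> th a \in V' /\ th b \in V'.
        by move=> h; have /subsetP s := inV' _ h; split; apply: s; rewrite in_set2 eqxx ?orbT.
      case h1: ([set a; b] \in E'); case h2: ([set th a; th b] \in E').
      * have [aX bX] := e1sub h1; have [a'X b'X] := e2sub h2.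
        have [c1 c2 c3 c4] := cover V' a b aS bS aX bX a'X b'X.
        apply: (T2 V' sV' c1 c2 c3 c4).
        have c : #|E' :&: N| <= 2.
          apply: leq_trans (subset_leq_card (subsetIr E' N)) _; by rewrite cards2 ltnS leq_b1.
        exact: arB viol bound c.
      * have c : #|E' :&: N| <= 1.
          rewrite -(cards1 [set a; b]); apply: subset_leq_card; apply/subsetP => f.
          rewrite in_setI in_set2 => /andP[fE' /orP[]/eqP e]; first by rewrite e in_set1.
          by move: h2; rewrite -e fE'.
        have [aX bX] := e1sub h1.
        exact: (single V' sV' (arS viol bound spX c) aX bX).
      * have c : #|E' :&: N| <= 1.
          rewrite -(cards1 [set th a; th b]); apply: subset_leq_card; apply/subsetP => f.
          rewrite in_setI in_set2 => /andP[fE' /orP[]/eqP e]; last by rewrite e in_set1.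
          by move: h1; rewrite -e fE'.
        have [a'X b'X] := e2sub h2.
        have tX := arS viol bound spX c.
        have tY := thtight V' sV' nz tX.
        apply: (single _ (thX _ sV') tY).
          by rewrite -(Hinv a aV); apply: imset_f.
        by rewrite -(Hinv b bV); apply: imset_f.
      * have c : #|E' :&: N| <= 0.
          suff -> : E' :&: N = set0 by rewrite cards0.
          apply/setP => f; rewrite in_set0 in_setI in_set2.
          apply/negbTE/negP => /andP[fE' /orP[]/eqP e].
            by move: h1; rewrite -e fE'.
          by move: h2; rewrite -e fE'.
        exact: arN viol bound spX c.
    + rewrite cardsU.
      have dis : iE E rV :&: N = set0.
        apply/setP => f; rewrite in_setI in_set0 in_set2 /iE inE.
        apply/negbTE; apply/negP => /andP[/andP[fE _] /orP[]/eqP ef]; move: fE; rewrite ef.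
          exact/negP.
        exact/negP.
      rewrite dis cards0 subn0 cards2 e12 /=.
      exact: arT Hcnt cE cV.
  - by move=> u uR; apply: Hnfv; apply: rVV.
  - move=> f; rewrite in_setU => /orP[|].
      by rewrite /iE inE => /andP[fE _]; exact: Hnfe.
    rewrite in_set2 => /orP[]/eqP->; rewrite imset2.
      by rewrite eq_sym.
    by rewrite !Hinv.
have cross : forall a b (X : {set T}), a \in [set x; th x] -> b \in [set y; th y] ->
    X \subset rV -> tightE E X -> a \in X -> b \in X -> X :&: th @: X = set0 ->
    [set a; th b] \in E -> False.
  move=> a b X aS bS sX tX aX bX dis e.
  have sXV := subset_trans sX rV_sub.
  have nzX : X != set0 by apply/set0Pn; exists a.
  have tY : tightE E (th @: X) := thtight X sX nzX tX.
  have sU : X :|: th @: X \subset rV by rewrite subUset sX thX.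
  have b'Y : th b \in th @: X := imset_f th bX.
  have a'Y : th a \in th @: X := imset_f th aX.
  have [c1 c2 c3 c4] := cover (X :|: th @: X) a b aS bS
     (subsetP (subsetUl _ _) _ aX) (subsetP (subsetUl _ _) _ bX)
     (subsetP (subsetUr _ _) _ a'Y) (subsetP (subsetUr _ _) _ b'Y).
  apply: (T2 _ sU c1 c2 c3 c4).
  have e_nX : [set a; th b] \notin iE E X :|: iE E (th @: X).
    rewrite in_setU /iE !inE negb_or e /=; apply/andP; split; apply/negP => /subsetP s.
      have : th b \in X :&: th @: X by rewrite in_setI b'Y s // in_set2 eqxx orbT.
      by rewrite dis in_set0.
    have : a \in X :&: th @: X by rewrite in_setI aX s // in_set2 eqxx.
    by rewrite dis in_set0.
  have sub : [set a; th b] |: (iE E X :|: iE E (th @: X)) \subset iE E (X :|: th @: X).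
    rewrite subUset sub1set /iE inE e /= subUset !sub1set !in_setU aX b'Y orbT /=.
    by rewrite subUset -!/(iE E _) !iE_sub ?subsetUl ?subsetUr.
  have h := subset_leq_card sub.
  rewrite cardsU1 e_nX cardsU iE_I dis (iE0 Hsg) cards0 subn0 in h.
  have cU : #|X :|: th @: X| = #|X| + #|th @: X| by rewrite cardsU dis cards0 subn0.
  rewrite cU; exact: arC h tX tY.
have eP : ([set th x; th y] \in E) = ([set x; y] \in E).
  apply/idP/idP => e; last exact: edge_th HZ e.
  by have := edge_th HZ e; rewrite !Hinv.
have eQ : ([set x; th y] \in E) = ([set th x; y] \in E).
  by apply/idP/idP => e; have := edge_th HZ e; rewrite !Hinv.
have xS : x \in [set x; th x] by rewrite in_set2 eqxx.
have x'S : th x \in [set x; th x] by rewrite in_set2 eqxx orbT.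
have yS : y \in [set y; th y] by rewrite in_set2 eqxx.
have y'S : th y \in [set y; th y] by rewrite in_set2 eqxx orbT.
case P: ([set x; y] \in E); case Q: ([set th x; y] \in E).
- exists x; split => //; cbv zeta; apply: Or31; split; rewrite ?eP ?eQ ?P ?Q //.
  have d1 : v != y := nbhd_ne Hsg yN.
  have d2 : v != x := nbhd_ne Hsg xN.
  have d3 : v != th x := nbhd_ne Hsg x'N.
  have d5 : v != th y by rewrite eq_sym (memne y'N' vnN').
  have d8 : y != th v := memne yN v'nN.
  have d11 : x != th v := memne xN v'nN.
  have d13 : th x != th v := memne x'N v'nN.
  have d15 : th v != th y := nbhd_ne Hsg y'N'.
  pose s := [:: v; y; x; th x; th v; th y].
  have us : uniq s.
    rewrite /s /= !inE !negb_or d1 d2 d3 vv' d5 (eq_sym y x) xy (eq_sym y (th x)) x'y d8 yy'.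
    by rewrite xx' d11 (eq_sym x (th y)) y'x d13 (eq_sym (th x)) y'x' d15.
  exists (fun i : 'I_6 => nth v s i); split.
  - move=> i j /eqP; rewrite (@nth_uniq _ v s i j (ltn_ord i) (ltn_ord j) us) => /eqP.
    exact: val_inj.
  - apply/setP => z; apply/imsetP/idP.
      case=> i _ ->; case: i => [[|[|[|[|[|[|i]]]]]] Hi] //=; by rewrite !inE eqxx ?orbT.
    rewrite !inE => /orP[/orP[/orP[/orP[/orP[]|]|]|]|] /eqP ->.
    + by exists (@Ordinal 6 0 isT); rewrite ?in_setT.
    + by exists (@Ordinal 6 4 isT); rewrite ?in_setT.
    + by exists (@Ordinal 6 2 isT); rewrite ?in_setT.
    + by exists (@Ordinal 6 3 isT); rewrite ?in_setT.
    + by exists (@Ordinal 6 1 isT); rewrite ?in_setT.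
    + by exists (@Ordinal 6 5 isT); rewrite ?in_setT.
  - have evy := inEd _ _ yN; have evx := inEd _ _ xN; have evx' := inEd _ _ x'N.
    have ev'x := inEd _ _ xN'; have ev'x' := inEd _ _ x'N'; have ev'y' := inEd _ _ y'N'.
    have exy' : [set x; th y] \in E by rewrite eQ Q.
    have ex'y' : [set th x; th y] \in E by rewrite eP P.
    have sing : forall u, ([set u; u] \in E) = false.
      move=> u; apply/negbTE/negP => /Hsg [_]; by rewrite cards2 eqxx.
    have n1 := negbTE (fixedne v vV); have n2 := negbTE (fixedne x xV).
    have n3 := negbTE (fixedne y yV).
    have n4 := ninE v (th y) y'V y'nN; have n5 := ninE (th v) y yV ynN'.
    move=> i j; rewrite F1c.
    case: i => [[|[|[|[|[|[|i]]]]]] Hi] //; case: j => [[|[|[|[|[|[|j]]]]]] Hj] //;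
    rewrite /F1_adj /=;
    first [ by rewrite ?evy ?evx ?evx' ?ev'x ?ev'x' ?ev'y' ?P ?Q ?exy' ?ex'y' ?sing ?n1 ?n2 ?n3 ?n4 ?n5
          | by rewrite set2C ?evy ?evx ?evx' ?ev'x ?ev'x' ?ev'y' ?P ?Q ?exy' ?ex'y' ?sing ?n1 ?n2 ?n3 ?n4 ?n5 ].
- exists x; split => //; cbv zeta; apply: Or32; split; rewrite ?eP ?eQ ?P ?Q //.
  case: (red x (th y) xS y'S _); first by rewrite eQ Q.
    done.
  case=> X [sX tX aX bX dis]; exfalso.
  by apply: (cross x (th y) X xS y'S sX tX aX bX dis); rewrite Hinv.
- exists (th x); split => //; cbv zeta; rewrite (Hinv x xV); apply: Or32.
  split; rewrite ?eP ?eQ ?P ?Q //.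
  case: (red (th x) (th y) x'S y'S _); first by rewrite eP P.
    done.
  case=> X [sX tX aX bX dis]; exfalso.
  by apply: (cross (th x) (th y) X x'S y'S sX tX aX bX dis); rewrite Hinv.
- exists x; split => //; cbv zeta; apply: Or33; split; rewrite ?eP ?eQ ?P ?Q //.
  have nP : [set x; y] \notin E by rewrite P.
  have nQ : [set x; th y] \notin E by rewrite eQ Q.
  case: (red x y xS yS nP) => [?|[X [sX tX xX yX _]]].
    by left.
  case: (red x (th y) xS y'S nQ) => [?|[W [sW tW xW y'W _]]].
    by right.
  exfalso.
  have sXV := subset_trans sX rV_sub; have sWV := subset_trans sW rV_sub.
  have nXW : X :&: W != set0 by apply/set0Pn; exists x; rewrite in_setI xX xW.
  have tU := tight_union Hsp sXV sWV nXW tX tW.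
  have sU : X :|: W \subset rV by rewrite subUset sX sW.
  have nzU : X :|: W != set0 by apply/set0Pn; exists x; rewrite in_setU xX.
  have tY := thtight _ sU nzU tU.
  have sY := thX _ sU.
  have yY : y \in th @: (X :|: W).
    by rewrite -(Hinv y yV); apply: imset_f; rewrite in_setU y'W orbT.
  have nUY : (X :|: W) :&: th @: (X :|: W) != set0.
    by apply/set0Pn; exists y; rewrite in_setI in_setU yX yY.
  have tZ := tight_union Hsp (subset_trans sU rV_sub) (subset_trans sY rV_sub) nUY tU tY.
  have sZ : (X :|: W) :|: th @: (X :|: W) \subset rV by rewrite subUset sU sY.
  apply: (T1 _ sZ tZ).
  + by rewrite !in_setU xX.
  + by rewrite in_setU imset_f ?orbT // in_setU xX.
  + by rewrite !in_setU yX.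
Qed.
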